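(* Let $G=([n],E)$ be an undirected graph, and let $\mathrm{CIM}_G=\operatorname{conv}\left(c_\mathcal{G}\colon \mathcal{G}=([n],E')\text{ a DAG with skeleton } G\right)$. Then $\operatorname{diam}(\mathrm{CIM}_G)\leq |E|$.
   Context: For a directed acyclic graph (DAG) $\mathcal{G}$ on vertex set $[n]=\{1,\dots,n\}$, the characteristic imset $c_\mathcal{G}$ is the 0/1-vector indexed by the subsets $S\subseteq[n]$ with $|S|\geq 2$, with $c_\mathcal{G}(S)=1$ if there exists $i\in S$ such that $S\subseteq \mathrm{pa}_\mathcal{G}(i)\cup\{i\}$ (where $\mathrm{pa}_\mathcal{G}(i)$ is the set of parents of $i$), and $c_\mathcal{G}(S)=0$ otherwise. The skeleton of a DAG is the undirected graph with the same vertices and adjacencies. For a polytope $P$, the vertex-edge graph $G(P)$ has the vertices of $P$ as nodes, with two vertices adjacent iff their convex hull is an edge of $P$; $\operatorname{diam}(P)$ is the maximum over pairs of vertices of the length of a shortest path between them in $G(P)$. *)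

(* Defs.v *)
From HB Require Import structures.
From mathcomp Require Import all_boot all_order all_algebra.
Set Implicit Arguments. Unset Strict Implicit. Unset Printing Implicit Defensive.
Import Order.TTheory GRing.Theory Num.Theory.
Local Open Scope ring_scope.

(** Coordinates: subsets S of [n] = 'I_n with |S| >= 2. *)
Definition bigsub (n : nat) := {S : {set 'I_n} | (1 < #|S|)%N}.

Definition pt (R : realFieldType) (n : nat) := {ffun bigsub n -> R}.

Section Defs.
Variables (R : realFieldType) (n : nat).
Local Notation pt := (pt R n).

(** Directed graphs on [n]: d i j means an arrow i -> j. *)
Definition acyclic (d : rel 'I_n) : Prop :=
  forall x y : 'I_n, d x y -> ~~ connect d y x.

Definition parents (d : rel 'I_n) (i : 'I_n) : {set 'I_n} := [set j | d j i].

Definition has_skeleton (d : rel 'I_n) (g : rel 'I_n) : Prop :=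
  forall i j : 'I_n, (d i j || d j i) = g i j.

Definition char_imset (d : rel 'I_n) : pt :=
  [ffun S : bigsub n =>
     if [exists i in val S, val S \subset i |: parents d i] then 1 else 0].

Definition simple_graph (g : rel 'I_n) : Prop := symmetric g /\ irreflexive g.
Definition num_edges (g : rel 'I_n) : nat :=
  #|[set p : 'I_n * 'I_n | (p.1 < p.2)%N && g p.1 p.2]|.

Definition dot (a x : pt) : R := \sum_(S : bigsub n) a S * x S.

Definition conv (V : pt -> Prop) (x : pt) : Prop :=
  exists (s : seq pt) (w : pt -> R),
    (forall v, v \in s -> V v) /\ (forall v, v \in s -> 0 <= w v) /\
    uniq s /\ \sum_(v <- s) w v = 1 /\
    forall S, x S = \sum_(v <- s) w v * v S.

Definition face (P F : pt -> Prop) : Prop :=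
  exists (a : pt) (b : R), (forall x, P x -> dot a x <= b) /\
    (forall x, F x <-> (P x /\ dot a x = b)).

Definition vertex (P : pt -> Prop) (v : pt) : Prop := face P (fun x => x = v).

Definition adjacent (P : pt -> Prop) (u v : pt) : Prop :=
  vertex P u /\ vertex P v /\ u <> v /\ face P (conv (fun x => x = u \/ x = v)).

Fixpoint walk (P : pt -> Prop) (u : pt) (s : seq pt) : Prop :=
  match s with
  | [::] => True
  | x :: s' => adjacent P u x /\ walk P x s'
  end.

Definition diam_le (P : pt -> Prop) (k : nat) : Prop :=
  forall u v, vertex P u -> vertex P v ->
    exists s : seq pt, (size s <= k)%N /\ walk P u s /\ last u s = v.

Definition CIM (g : rel 'I_n) : pt -> Prop :=
  conv (fun x => exists d : rel 'I_n, acyclic d /\ has_skeleton d g /\ x = char_imset d).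

End Defs.

(* Main.v *)
Require Import Defs.
From mathcomp Require Import all_boot all_order all_algebra.
From mathcomp Require Import ring lra zify.
Set Implicit Arguments. Unset Strict Implicit. Unset Printing Implicit Defensive.
Import Order.TTheory GRing.Theory Num.Theory.

Section Convex.
Local Open Scope ring_scope.
Variables (R : realFieldType) (n : nat).
Local Notation pt := (pt R n).
Implicit Types (a x y p q : pt) (V W : pt -> Prop).

Lemma dot_conv a (s : seq pt) (w : pt -> R) x :
  (forall S, x S = \sum_(v <- s) w v * v S) ->
  dot a x = \sum_(v <- s) w v * dot a v.
Proof.
move=> hx; rewrite /dot.
under eq_bigr => S _ do rewrite hx big_distrr.
rewrite exchange_big /=; apply: eq_bigr => v _.
rewrite big_distrr /=; apply: eq_bigr => S _; by rewrite mulrCA.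
Qed.

Lemma conv_le V a b x : (forall y, V y -> dot a y <= b) -> conv V x -> dot a x <= b.
Proof.
move=> hle [s [w [hV [hw [_ [h1 hx]]]]]].
rewrite (dot_conv a hx).
have -> : b = \sum_(v <- s) w v * b by rewrite -big_distrl /= h1 mul1r.
rewrite big_seq [X in _ <= X]big_seq; apply: ler_sum => v vs.
by apply: ler_wpM2l; [apply: hw | apply: hle; apply: hV].
Qed.

Lemma conv_eqb V a b x : (forall y, V y -> dot a y <= b) -> conv V x ->
  dot a x = b -> conv (fun y => V y /\ dot a y = b) x.
Proof.
move=> hle [s [w [hV [hw [hu [h1 hx]]]]]] hxb.
have hsum : \sum_(v <- s | v \in s) w v * (b - dot a v) = 0.
  rewrite -big_seq.
  under eq_bigr => v _ do rewrite mulrBr.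
  rewrite sumrB -big_distrl /= h1 mul1r -(dot_conv a hx) hxb; lra.
have hz : forall v, v \in s -> w v * (b - dot a v) = 0.
  move=> v vs.
  have hn : forall i, i \in s -> 0 <= w i * (b - dot a i).
    move=> i iis; apply: mulr_ge0; first exact: hw.
    by rewrite subr_ge0; apply: hle; apply: hV.
  move: (psumr_eq0 s hn); rewrite hsum eqxx => /esym/allP/(_ v vs).
  by rewrite vs /= => /eqP.
exists [seq v <- s | w v != 0], w; split; last split; last split; last split.
- move=> v; rewrite mem_filter => /andP [wv vs]; split; first exact: hV.
  by move: (hz v vs) => /eqP; rewrite mulf_eq0 (negbTE wv) /= subr_eq0 => /eqP.
- by move=> v; rewrite mem_filter => /andP [_ vs]; apply: hw.
- exact: filter_uniq.
- rewrite big_filter -h1 [in RHS](bigID (fun v => w v != 0)) /=.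
  by rewrite [X in _ = _ + X]big1 ?addr0 // => v /negPn/eqP.
- move=> S; rewrite hx big_filter [in LHS](bigID (fun v => w v != 0)) /=.
  by rewrite [X in _ + X = _]big1 ?addr0 // => v /negPn/eqP ->; rewrite mul0r.
Qed.

Lemma conv_mono V W x : (forall y, V y -> W y) -> conv V x -> conv W x.
Proof.
move=> hVW [s [w [hV [hw [hu [h1 hx]]]]]].
by exists s, w; split; [move=> v /hV/hVW | split].
Qed.

Lemma conv1 V x : V x -> conv V x.
Proof.
move=> hx; exists [:: x], (fun _ => 1); split; last split; last split; last split.
- by move=> v; rewrite inE => /eqP ->.
- by move=> v _; exact: ler01.
- by [].
- by rewrite big_cons big_nil addr0.
- by move=> S; rewrite big_cons big_nil addr0 mul1r.
Qed.

Lemma conv_dot_eq V a b x : (forall y, V y -> dot a y = b) -> conv V x -> dot a x = b.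
Proof.
move=> hV [s [w [hVs [hw [hu [h1 hx]]]]]].
rewrite (dot_conv a hx) big_seq.
under eq_bigr => v vs do rewrite (hV v (hVs v vs)).
by rewrite -big_seq -big_distrl /= h1 mul1r.
Qed.

Lemma conv_single p x : conv (fun y => y = p) x -> x = p.
Proof.
move=> [s [w [hVs [hw [hu [h1 hx]]]]]].
apply/ffunP => S; rewrite hx.
have -> : \sum_(v <- s) w v * v S = \sum_(v <- s) w v * p S.
  by apply: eq_big_seq => v vs; rewrite (hVs v vs).
by rewrite -big_distrl /= h1 mul1r.
Qed.

Lemma face_of V W a b : (forall y, V y -> dot a y <= b) ->
  (forall y, W y <-> (V y /\ dot a y = b)) -> face (conv V) (conv W).
Proof.
move=> hle hW; exists a, b; split; first by move=> x; apply: conv_le.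
move=> x; split.
- move=> hx; split.
    by apply: conv_mono hx => y /hW [].
  by apply: conv_dot_eq hx => y /hW [].
- move=> [hx hxb]; apply: conv_mono (conv_eqb hle hx hxb) => y hy.
  by apply/hW.
Qed.

Lemma vertex_of V a b p : (forall y, V y -> dot a y <= b) -> V p -> dot a p = b ->
  (forall y, V y -> dot a y = b -> y = p) -> vertex (conv V) p.
Proof.
move=> hle hp hpb huniq; exists a, b; split; first by move=> x; apply: conv_le.
move=> x; split.
- by move=> ->; split; [apply: conv1 | ].
- move=> [hx hxb]; apply: conv_single.
  apply: conv_mono (conv_eqb hle hx hxb) => y [hy hyb]; exact: huniq.
Qed.

Lemma edge_of V a b p q : (forall y, V y -> dot a y <= b) -> V p -> V q ->
  dot a p = b -> dot a q = b ->
  (forall y, V y -> dot a y = b -> y = p \/ y = q) ->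
  face (conv V) (conv (fun x => x = p \/ x = q)).
Proof.
move=> hle hp hq hpb hqb h; apply: (@face_of V (fun x => x = p \/ x = q) a b hle) => y; split.
- by case=> ->; split.
- by move=> [hy hyb]; apply: h.
Qed.

Lemma vertex_in V p : vertex (conv V) p -> V p.
Proof.
move=> [a [b [hle hF]]].
have [hp hpb] := (proj1 (hF p) erefl).
have hle' : forall y, V y -> dot a y <= b by move=> y hy; apply: hle; apply: conv1.
move: (conv_eqb hle' hp hpb) => [s [w [hVs [hw [hu [h1 hx]]]]]].
case: s hVs hw hu h1 hx => [|y s] hVs hw hu h1 hx.
  by move: h1; rewrite big_nil => /eqP; rewrite eq_sym oner_eq0.
have [hy hyb] := hVs y (mem_head _ _).
have -> : p = y by apply/esym/(proj2 (hF y)); split; [apply: conv1 | ].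
exact: hy.
Qed.

End Convex.

Section Graph.
Variable n : nat.
Implicit Types (d e : rel 'I_n).

Definition cf d (S : {set 'I_n}) : bool := [exists i in S, S \subset i |: parents d i].

Lemma cfP d (S : {set 'I_n}) : reflect (exists2 i, i \in S & forall j, j \in S -> j = i \/ d j i) (cf d S).
Proof.
apply: (iffP existsP) => [[i /andP [iS sub]] | [i iS h]].
  exists i => // j jS; move/subsetP: sub => /(_ j jS); rewrite !inE => /orP [/eqP|]; auto.
exists i; rewrite iS /=; apply/subsetP => j jS; rewrite !inE.
by case: (h j jS) => [->|->]; rewrite ?eqxx ?orbT.
Qed.

Lemma acyc_irr d : acyclic d -> forall x, d x x = false.
Proof. by move=> h x; apply/negP => hx; move: (h x x hx); rewrite connect0. Qed.

Lemma acyc_asym d : acyclic d -> forall x y, d x y -> d y x = false.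
Proof. by move=> h x y hxy; apply/negP => hyx; move: (h x y hxy); rewrite connect1. Qed.

Lemma connect_step e x y : connect e x y -> x != y -> exists2 z, e x z & connect e z y.
Proof.
move=> /connectP [s]; case: s => [|z s] /=; first by move=> _ ->; rewrite eqxx.
move=> /andP [exz pth] -> _; exists z => //; apply/connectP; by exists s.
Qed.

Lemma acyc_cyc d x y : acyclic d -> connect d x y -> connect d y x -> x = y.
Proof.
move=> hd cxy cyx; apply/eqP/negPn/negP => nxy.
have [z dxz czy] := connect_step cxy nxy.
by move: (hd x z dxz); rewrite (connect_trans czy cyx).
Qed.

Definition flip d (x y : 'I_n) : rel 'I_n := fun a b =>
  if (a == y) && (b == x) then true else if (a == x) && (b == y) then false else d a b.

Definition dminus d (x y : 'I_n) : rel 'I_n := fun a b => d a b && ~~ ((a == x) && (b == y)).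

Lemma connect_dminus d x y p q : connect (dminus d x y) p q -> connect d p q.
Proof. by apply: connect_sub => a b /andP [hab _]; apply: connect1. Qed.

Lemma connect_flip d x y p q : connect (flip d x y) p q ->
  connect (dminus d x y) p q \/ (connect (dminus d x y) p y /\ connect (dminus d x y) x q).
Proof.
move=> /connectP [s]; elim: s p => [|z s IH] p /=.
  by move=> _ ->; left; exact: connect0.
move=> /andP [hpz pth] hq; have := IH z pth hq.
rewrite /flip in hpz.
case: ifP hpz => [/andP [/eqP -> /eqP ->] _ | hn].
  move=> [cxq | [_ cxq]]; right; split => //; exact: connect0.
case: ifP => // hn2 dpz.
have dm : dminus d x y p z by rewrite /dminus dpz hn2.
move=> [czq | [czy cxq]].
  by left; apply: connect_trans (connect1 dm) czq.
by right; split => //; apply: connect_trans (connect1 dm) czy.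
Qed.

Lemma flip_acyclic d x y : acyclic d -> d x y ->
  (forall z, d x z -> z != y -> ~~ connect d z y) -> acyclic (flip d x y).
Proof.
move=> hd dxy hcrit.
have key : connect (dminus d x y) x y -> False.
  have nxy : x != y by apply/eqP => exy; move: dxy; rewrite exy acyc_irr.
  move=> cxy; have [z /andP [dxz hz] czy] := connect_step cxy nxy.
  have zy : z != y by apply: contra hz => /eqP ->; rewrite !eqxx.
  by move: (hcrit z dxz zy); rewrite (connect_dminus czy).
move=> a b hab; apply/negP => cba; apply: key.
move: hab; rewrite /flip; case: ifP => [/andP [/eqP ea /eqP eb] _ | hn].
  subst a b; by case: (connect_flip cba) => [|[]].
case: ifP => // hn2 dab.
have dm : dminus d x y a b by rewrite /dminus dab hn2.
case: (connect_flip cba) => [cba' | [cby cxa]].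
  by move: (hd a b dab); rewrite (connect_dminus cba').
by apply: connect_trans cxa (connect_trans (connect1 dm) cby).
Qed.


Lemma connect_diff d d' p q : connect d p q ->
  connect d' p q \/ exists a b, [/\ d a b, ~~ d' a b, connect d p a & connect d b q].
Proof.
move=> /connectP [s]; elim: s p => [|z s IH] p /=.
  by move=> _ ->; left; exact: connect0.
move=> /andP [dpz pth] hq.
case: (boolP (d' p z)) => hd'.
  case: (IH z pth hq) => [c | [a [b [h1 h2 h3 h4]]]].
    by left; apply: connect_trans (connect1 hd') c.
  by right; exists a, b; split => //; apply: connect_trans (connect1 dpz) h3.
right; exists p, z; split => //.
by apply/connectP; exists s.
Qed.

Definition interval d (p : 'I_n * 'I_n) := [set z | connect d p.1 z && connect d z p.2].

Lemma exists_flip d d' : acyclic d -> acyclic d' ->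
  (forall a b, d a b || d b a = d' a b || d' b a) ->
  forall p, d p.1 p.2 -> ~~ d' p.1 p.2 ->
  exists x y, [/\ d x y, ~~ d' x y & acyclic (flip d x y)].
Proof.
move=> hd hd' hsk p.
move: {2}#|interval d p| (leqnn #|interval d p|) => k.
elim: k p => [|k IH] [x y] /= hk dxy nd'xy.
  have : 0 < #|interval d (x, y)| by apply/card_gt0P; exists x; rewrite inE /= connect0 connect1.
  by rewrite leqn0 in hk; rewrite (eqP hk).
case: (boolP [forall z, d x z ==> (z != y) ==> ~~ connect d z y]) => hc.
  exists x, y; split => //; apply: flip_acyclic => // z dxz zy.
  by move/forallP: hc => /(_ z); rewrite dxz zy.
move/forallPn: hc => [z]; rewrite !negb_imply => /andP [dxz /andP [zy czy0]].
have czy : connect d z y by move: czy0; case: (connect d z y).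
have d'yx : d' y x by move: (hsk x y); rewrite dxy (negbTE nd'xy) /= => /esym.
have cxy : connect d x y by apply: connect_trans (connect1 dxz) czy.
suff [a [b [dab nd'ab hpr]]] : exists a b, [/\ d a b, ~~ d' a b & interval d (a, b) \proper interval d (x, y)].
  apply: (IH (a, b)) => //=; move: (proper_card hpr) => h; rewrite -ltnS; exact: leq_trans h hk.
case: (boolP (d' x z)) => d'xz.
  case: (connect_diff d' czy) => [c'zy | [a [b [dab nd'ab cza cby]]]].
    by move: (hd' y x d'yx); rewrite (connect_trans (connect1 d'xz) c'zy).
  exists a, b; split => //; apply/properP; split.
    apply/subsetP => w; rewrite !inE /= => /andP [caw cwb].
    by rewrite (connect_trans (connect1 dxz) (connect_trans cza caw)) (connect_trans cwb cby).
  exists x; first by rewrite inE /= connect0 cxy.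
  rewrite inE /=; apply/negP => /andP [cax _].
  by move: (hd x z dxz); rewrite (connect_trans cza cax).
exists x, z; split => //; apply/properP; split.
  apply/subsetP => w; rewrite !inE /= => /andP [cxw cwz].
  by rewrite cxw (connect_trans cwz czy).
exists y; first by rewrite inE /= cxy connect0.
rewrite inE /=; apply/negP => /andP [_ cyz].
by move: zy; rewrite (acyc_cyc hd czy cyz) eqxx.
Qed.

End Graph.

Definition Pset n (d : rel 'I_n) (u v : 'I_n) := [set x | d x u && (x != v)].
Definition Spair n (u v : 'I_n) (T : {set 'I_n}) := u |: (v |: T).

Lemma Spair_sym n (u v : 'I_n) T : Spair u v T = Spair v u T.
Proof. by rewrite /Spair setUCA. Qed.

Lemma card_Spair n (u v : 'I_n) T : u != v -> 1 < #|Spair u v T|.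
Proof. by move=> uv; apply/card_gt1P; exists u, v; rewrite !inE !eqxx ?orbT. Qed.

Record ctx n (g D D1 E : rel 'I_n) (u v : 'I_n) : Prop := Ctx {
  c_hD : acyclic D; c_hD1 : acyclic D1; c_hE : acyclic E;
  c_vu : D v u; c_uv : D1 u v;
  c_same : forall a b, ~~ ((a == u) && (b == v)) -> ~~ ((a == v) && (b == u)) -> D1 a b = D a b;
  c_sk : has_skeleton D g; c_sk1 : has_skeleton D1 g; c_skE : has_skeleton E g;
  c_ag : forall S : {set 'I_n}, 1 < #|S| -> cf D S = cf D1 S -> cf E S = cf D S }.

Lemma ctx_swap n g (D D1 E : rel 'I_n) u v : ctx g D D1 E u v -> ctx g D1 D E v u.
Proof.
case=> hD hD1 hE hvu huv hsame hsk hsk1 hskE hag; split => //.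
- move=> a b h1 h2; apply/esym/hsame => //.
- by move=> S cS e; rewrite hag // e.
Qed.

Section Struct.
Variables (n : nat) (g : rel 'I_n) (D D1 E : rel 'I_n) (u v : 'I_n).
Variable c : ctx g D D1 E u v.
Let hD := c_hD c.
Let hD1 := c_hD1 c.
Let hE := c_hE c.
Let hvu := c_vu c.
Let huv := c_uv c.
Let hsame := c_same c.
Let hsk := c_sk c.
Let hsk1 := c_sk1 c.
Let hskE := c_skE c.
Let hag := c_ag c.

Implicit Types S : {set 'I_n}.
Local Notation P := (Pset D u v).
Local Notation Q := (Pset D1 v u).
Local Notation SP := (Spair u v P).
Local Notation SQ := (Spair v u Q).

Lemma u_neq_v : u != v.
Proof. by apply/eqP => e; move: hvu; rewrite e (acyc_irr hD). Qed.

Lemma hsameU a b : a != u -> b != u -> D1 a b = D a b.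
Proof. by move=> au bu; apply: hsame; rewrite ?(negbTE au) ?(negbTE bu) ?andbF. Qed.

Lemma gsym a b : g a b = g b a.
Proof. by rewrite -!hsk orbC. Qed.

Lemma skE a b : E a b -> g a b.
Proof. by move=> h; rewrite -hskE h. Qed.
Lemma skD a b : D a b -> g a b.
Proof. by move=> h; rewrite -hsk h. Qed.
Lemma skD1 a b : D1 a b -> g a b.
Proof. by move=> h; rewrite -hsk1 h. Qed.

Lemma inP x : (x \in P) = D x u && (x != v).
Proof. by rewrite inE. Qed.
Lemma inQ x : (x \in Q) = D1 x v && (x != u).
Proof. by rewrite inE. Qed.

Lemma P_neq_u x : x \in P -> x != u.
Proof. by rewrite inP => /andP [dxu _]; apply/eqP => e; move: dxu; rewrite e (acyc_irr hD). Qed.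

(* no D1-cycle u -> v -> k -> u for k in P *)
Lemma P_no_vk k : k \in P -> D v k = false.
Proof.
move=> kP; have ku := P_neq_u kP; move: kP; rewrite inP => /andP [dku kv].
apply/negP => dvk.
have d1vk : D1 v k by rewrite hsameU // eq_sym u_neq_v.
have d1ku : D1 k u by rewrite hsame // ?(negbTE ku) ?(negbTE kv).
by move: (@hD1 u v huv); rewrite (connect_trans (connect1 d1vk) (connect1 d1ku)).
Qed.

Lemma Da x : x \in P :\: Q -> ~~ g x v.
Proof.
rewrite inE => /andP [xQ xP]; have xu := P_neq_u xP.
have nd1 : ~~ D1 x v by move: xQ; rewrite inQ xu andbT.
have ndxv : ~~ D x v by rewrite -hsameU // eq_sym u_neq_v.
by rewrite -hsk (negbTE ndxv) (P_no_vk xP).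
Qed.

Lemma notuv S : u \notin S -> cf D1 S = cf D S.
Proof.
move=> uS; apply/idP/idP => /cfP [i iS h]; apply/cfP; exists i => // j jS;
  (case: (h j jS) => [->|hji]; [by left | right]).
- by rewrite -hsameU //; apply: contraNneq uS => <-.
- by rewrite hsameU //; apply: contraNneq uS => <-.
Qed.

Lemma L x k : x \in P :\: Q -> k \in P -> k != x -> E v k -> E x k -> False.
Proof.
move=> xPQ kP kx evk exk.
have xP : x \in P by move: xPQ; rewrite inE => /andP [].
have nv : ~~ g x v := Da xPQ.
have dkv : D k v by move: (skE evk); rewrite -hsk (P_no_vk kP).
have kv : k != v by move: kP; rewrite inP => /andP [].
have xv : x != v by move: xP; rewrite inP => /andP [].
pose W := [set x; k; v].
have cardW : 1 < #|W| by apply/card_gt1P; exists k, v; rewrite !inE !eqxx ?orbT.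
have uW : u \notin W.
  rewrite !inE negb_or negb_or eq_sym (P_neq_u xP) eq_sym (P_neq_u kP) /=.
  exact: u_neq_v.
have cEW : cf E W.
  apply/cfP; exists k; first by rewrite !inE eqxx ?orbT.
  move=> j; rewrite !inE => /orP [/orP [/eqP ->|/eqP ->]|/eqP ->]; by [right | left | right].
have cDW : ~~ cf D W.
  apply/cfP => [[i]]; rewrite !inE => /orP [/orP [/eqP ->|/eqP ->]|/eqP ->] h.
  - have := h v; rewrite !inE eqxx ?orbT => /(_ isT) [e|dvx]; first by move: xv; rewrite e eqxx.
    by move: nv; rewrite gsym (skD dvx).
  - have := h v; rewrite !inE eqxx ?orbT => /(_ isT) [e|dvk]; first by move: kv; rewrite e eqxx.
    by move: (P_no_vk kP); rewrite dvk.
  - have := h x; rewrite !inE eqxx ?orbT => /(_ isT) [e|dxv]; first by move: xv; rewrite e eqxx.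
    by move: nv; rewrite (skD dxv).
by move: cDW; rewrite -(hag cardW (esym (notuv uW))) cEW.
Qed.

Lemma sink_u S x i : (forall j, j \in S -> [|| j == u, j == v | j \in P]) ->
  v \in S -> x \in S -> x \in P :\: Q -> i \in S ->
  (forall j, j \in S -> j = i \/ E j i) -> i = u.
Proof.
move=> hS vS xS xPQ iS h.
have xP : x \in P by move: xPQ; rewrite inE => /andP [].
have xv : x != v by move: xP; rewrite inP => /andP [].
case/or3P: (hS i iS) => [/eqP //|/eqP iv|iP].
  subst i; case: (h x xS) => [e|exv]; first by move: xv; rewrite e eqxx.
  by move: (Da xPQ); rewrite (skE exv).
have iv : i != v by move: iP; rewrite inP => /andP [].
case: (h v vS) => [e|evi]; first by move: iv; rewrite e eqxx.
case: (eqVneq i x) => [ix|ix].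
  by subst i; move: (Da xPQ); rewrite gsym (skE evi).
case: (h x xS) => [e|exi]; first by move: ix; rewrite e eqxx.
by case: (L xPQ iP ix evi exi).
Qed.

Lemma cdis S : cf D S -> ~~ cf D1 S ->
  [/\ u \in S, v \in S, (forall j, j \in S -> [|| j == u, j == v | j \in P])
    & exists2 x, x \in S & x \in P :\: Q].
Proof.
move=> /cfP [i iS h] nD1.
have iu : i = u.
  apply/eqP/negPn/negP => iu.
  case: (eqVneq i v) => iv.
    subst i; case: (boolP (u \in S)) => uS.
      case: (h u uS) => [e|duv]; first by move: u_neq_v; rewrite e eqxx.
      by move: (acyc_asym hD hvu); rewrite duv.
    by move: nD1; rewrite notuv // => /negP; apply; apply/cfP; exists v.
  move: nD1 => /negP; apply; apply/cfP; exists i => // j jS.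
  case: (h j jS) => [->|dji]; [by left | right].
  by rewrite hsame // negb_and ?iu ?iv ?orbT.
subst i.
have vS : v \in S.
  apply/negPn/negP => vS; move: nD1 => /negP; apply.
  apply/cfP; exists u => // j jS; case: (h j jS) => [->|dju]; [by left | right].
  have jv : j != v by apply: contraNneq vS => <-.
  by rewrite hsame // ?(negbTE u_neq_v) ?(negbTE jv) ?andbF.
have hS : forall j, j \in S -> [|| j == u, j == v | j \in P].
  move=> j jS; case: (h j jS) => [->|dju]; first by rewrite eqxx.
  by rewrite inP dju /=; case: (j == v); rewrite ?orbT.
split => //.
case: (boolP [exists x in S, x \in P :\: Q]) => [/existsP [x /andP [xS xPQ]]|hn].
  by exists x.
move: nD1 => /negP; case; apply/cfP; exists v => // j jS.
case/or3P: (hS j jS) => [/eqP ->|/eqP ->|jP]; [by right | by left | right].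
have jQ : j \in Q.
  apply/negPn/negP => jQ; move/existsP: hn; apply; exists j.
  by rewrite jS inE jQ jP.
by move: jQ; rewrite inQ => /andP [].
Qed.

Lemma C2 x0 : x0 \in P :\: Q -> cf E SP -> E v u /\ forall z, z \in P -> E z u.
Proof.
move=> x0PQ /cfP [i iS h].
have x0P : x0 \in P by move: x0PQ; rewrite inE => /andP [].
have hS : forall j, j \in SP -> [|| j == u, j == v | j \in P] by move=> j; rewrite !inE.
have vS : v \in SP by rewrite !inE eqxx ?orbT.
have xS : x0 \in SP by rewrite /Spair !in_setU1 x0P ?orbT.
have iu := sink_u hS vS xS x0PQ iS h; subst i.
split.
  by case: (h v vS) => // e; move: u_neq_v; rewrite e eqxx.
move=> z zP; case: (h z); first by rewrite /Spair !in_setU1 zP ?orbT.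
  by move=> e; move: (P_neq_u zP); rewrite e eqxx.
by [].
Qed.

Lemma C4 x0 : x0 \in P :\: Q -> cf E SP -> forall S, cf D S -> ~~ cf D1 S -> cf E S.
Proof.
move=> x0PQ cE S cD nD1; have [evu hz] := C2 x0PQ cE.
have [uS vS hS _] := cdis cD nD1.
apply/cfP; exists u => // j jS; case/or3P: (hS j jS) => [/eqP ->|/eqP ->|jP]; [by left|by right|].
by right; apply: hz.
Qed.

Lemma C3 : (forall x, x \in P :\: Q -> ~~ cf E (Spair u v [set x])) ->
  forall S, cf D S -> ~~ cf D1 S -> ~~ cf E S.
Proof.
move=> hx S cD nD1; have [uS vS hS [x xS xPQ]] := cdis cD nD1.
apply/negP => /cfP [i iS h].
have iu := sink_u hS vS xS xPQ iS h; subst i.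
have xP : x \in P by move: xPQ; rewrite inE => /andP [].
have xu := P_neq_u xP.
move/negP: (hx x xPQ); apply; apply/cfP; exists u; first by rewrite !inE eqxx.
move=> j; rewrite !inE => /orP [/eqP ->|/orP [/eqP ->|/eqP ->]]; first by left.
  by case: (h v vS) => [e|evu]; [move: u_neq_v; rewrite e eqxx | right].
by case: (h x xS) => [e|exu]; [move: xu; rewrite e eqxx | right].
Qed.

Lemma cfD_SP : cf D SP.
Proof.
apply/cfP; exists u; first by rewrite !inE eqxx.
move=> j; rewrite !inE => /orP [/eqP ->|/orP [/eqP ->|]]; [by left | by right |].
by move=> /andP [dju _]; right.
Qed.

Lemma cfD_X x : x \in P :\: Q -> cf D (Spair u v [set x]).
Proof.
rewrite inE => /andP [_]; rewrite inP => /andP [dxu _].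
apply/cfP; exists u; first by rewrite !inE eqxx.
by move=> j; rewrite !inE => /orP [/eqP ->|/orP [/eqP ->|/eqP ->]]; [left | right | right].
Qed.

Lemma cfD_SQ : Q \subset P -> cf D SQ.
Proof.
move=> /subsetP QP; apply/cfP; exists u; first by rewrite !inE eqxx ?orbT.
move=> j; rewrite !inE => /orP [/eqP ->|/orP [/eqP ->|jQ]]; [by right | by left |].
by have := QP j; rewrite !inE jQ => /(_ isT) /andP [dju _]; right.
Qed.

End Struct.

Definition Xset n (u v : 'I_n) (A B : {set 'I_n}) : {set bigsub n} :=
  [set S : bigsub n | [exists x in A :\: B, val S == Spair u v [set x]]].

Definition cnt n (E : rel 'I_n) (X : {set bigsub n}) := #|[set S in X | cf E (val S)]|.

Lemma cnt_le n (E : rel 'I_n) X : cnt E X <= #|X|.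
Proof. by apply: subset_leq_card; apply/subsetP => S; rewrite inE => /andP []. Qed.

Definition mXn n (D D1 : rel 'I_n) (u v : 'I_n) := #|Xset u v (Pset D u v) (Pset D1 v u)|.

Definition mkbig n (T : {set 'I_n}) (h : 1 < #|T|) : bigsub n := exist _ T h.

Section Agree.
Variables (n : nat) (g : rel 'I_n) (D D1 E : rel 'I_n) (u v : 'I_n).
Variable c : ctx g D D1 E u v.
Let hD := c_hD c.
Let hE := c_hE c.
Let hvu := c_vu c.
Let hag := c_ag c.
Let c' := ctx_swap c.
Implicit Types S : {set 'I_n}.
Local Notation P := (Pset D u v).
Local Notation Q := (Pset D1 v u).
Local Notation SP := (Spair u v P).
Local Notation SQ := (Spair v u Q).
Local Notation Xs := (Xset u v P Q).
Local Notation Ys := (Xset v u Q P).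
Local Notation mX := (mXn D D1 u v).
Local Notation mY := (mXn D1 D v u).

Let uv : u != v := u_neq_v c.

Lemma in_Xs x (xPQ : x \in P :\: Q) : mkbig (card_Spair [set x] uv) \in Xs.
Proof. by rewrite inE; apply/existsP; exists x; rewrite xPQ /=. Qed.

Lemma F2 x0 : x0 \in P :\: Q -> cf E SP -> cnt E Xs = mX.
Proof.
move=> x0PQ cE; rewrite /cnt; apply: eq_card => S; rewrite !inE.
case: (boolP [exists x in P :\: Q, val S == Spair u v [set x]]) => //= /existsP [x /andP [xPQ /eqP ->]].
have [evu hz] := C2 c x0PQ cE.
have xP : x \in P by move: xPQ; rewrite inE => /andP [].
have xu := P_neq_u c xP.
apply/cfP; exists u; first by rewrite !inE eqxx.
move=> j; rewrite !inE => /orP [/eqP ->|/orP [/eqP ->|/eqP ->]]; [by left | by right | by right; apply: hz].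
Qed.

Lemma F3 : cnt E Xs = 0 -> forall S, cf D S -> ~~ cf D1 S -> ~~ cf E S.
Proof.
move=> h0; apply: (C3 c) => x xPQ.
move/eqP: h0; rewrite /cnt cards_eq0 => /eqP /setP /(_ (mkbig (card_Spair [set x] uv))).
by rewrite in_set0 in_set in_Xs //= => /negbT.
Qed.

Lemma F4 : mX = 0 -> forall S, cf D S -> cf D1 S.
Proof.
move=> h0 S cD; case: (boolP (cf D1 S)) => // nD1.
have [_ _ _ [x _ xPQ]] := cdis c cD nD1.
by move/eqP: h0; rewrite /cnt cards_eq0 => /eqP /setP /(_ (mkbig (card_Spair [set x] uv))); rewrite in_Xs // inE.
Qed.

Lemma F5 : 0 < mX -> exists x0, x0 \in P :\: Q.
Proof.
by move/card_gt0P => [S]; rewrite inE => /existsP [x /andP [xPQ _]]; exists x.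
Qed.

End Agree.

Lemma ctx_selfD n g (D D1 E : rel 'I_n) u v : ctx g D D1 E u v -> ctx g D D1 D u v.
Proof. by case=> *; split. Qed.

Lemma ctx_selfD1 n g (D D1 E : rel 'I_n) u v : ctx g D D1 E u v -> ctx g D D1 D1 u v.
Proof. by case=> *; split => // S _ ->. Qed.

Definition sameim n (E D : rel 'I_n) := forall S : {set 'I_n}, 1 < #|S| -> cf E S = cf D S.

Section Agree2.
Variables (n : nat) (g : rel 'I_n) (D D1 E : rel 'I_n) (u v : 'I_n).
Variable c : ctx g D D1 E u v.
Let c' := ctx_swap c.
Let hE := c_hE c.
Let hag := c_ag c.
Implicit Types S : {set 'I_n}.
Local Notation P := (Pset D u v).
Local Notation Q := (Pset D1 v u).
Local Notation SP := (Spair u v P).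
Local Notation SQ := (Spair v u Q).
Local Notation Xs := (Xset u v P Q).
Local Notation Ys := (Xset v u Q P).
Local Notation mX := (mXn D D1 u v).
Local Notation mY := (mXn D1 D v u).

Lemma F6 : mY = 0 -> cf E SQ.
Proof.
move=> h0.
have QP : Q \subset P.
  apply/subsetP => y yQ; apply/negPn/negP => nyP.
  have yQP : y \in Q :\: P by rewrite inE nyP yQ.
  by move: (in_Xs c' yQP); move/eqP: h0; rewrite cards_eq0 => /eqP ->; rewrite inE.
rewrite hag.
- exact: cfD_SQ c QP.
- exact: card_Spair _ (u_neq_v c').
- by rewrite (cfD_SQ c QP) (cfD_SP c').
Qed.

Lemma F7 : 0 < mX -> 0 < mY -> cf E SP -> ~~ cf E SQ.
Proof.
move=> /F5 [x0 x0PQ] /F5 [y0 y0PQ] cP; apply/negP => cQ.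
have [evu _] := C2 c x0PQ cP.
have [euv _] := C2 c' y0PQ cQ.
by move: (acyc_asym hE evu); rewrite euv.
Qed.

Lemma F9 : E v u -> forall y, y \in Q :\: P -> ~~ cf E (Spair v u [set y]).
Proof.
move=> evu y yQP; apply/negP => /cfP [i iS h].
have yQ : y \in Q by move: yQP; rewrite inE => /andP [].
have hS : forall j, j \in Spair v u [set y] -> [|| j == v, j == u | j \in Q].
  move=> j; rewrite /Spair !in_setU1 in_set1 => /or3P [->|->|/eqP ->]; rewrite ?orTb ?orbT //.
  by rewrite yQ !orbT.
have uS : u \in Spair v u [set y] by rewrite /Spair !in_setU1 eqxx orbT.
have yS : y \in Spair v u [set y] by rewrite /Spair !in_setU1 in_set1 eqxx !orbT.
have iv := sink_u c' hS uS yS yQP iS h; subst i.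
case: (h u uS) => [e|euv]; first by move: (u_neq_v c); rewrite e eqxx.
by move: (acyc_asym hE evu); rewrite euv.
Qed.

Lemma cntY0 : E v u -> cnt E Ys = 0.
Proof.
move=> evu; apply/eqP; rewrite /cnt cards_eq0; apply/eqP/setP => S; rewrite !inE.
apply/negP => /andP [/existsP [y /andP [yQP /eqP eS]]].
by rewrite eS; apply/negP; apply: F9.
Qed.

Lemma finD : (forall S, cf D S -> ~~ cf D1 S -> cf E S) ->
  (forall S, cf D1 S -> ~~ cf D S -> ~~ cf E S) -> sameim E D.
Proof.
move=> hA hB S cS.
case eD: (cf D S); case eD1: (cf D1 S).
- by rewrite hag // eD eD1.
- by apply: hA; rewrite ?eD1.
- by apply/negbTE/hB; rewrite ?eD.
- by rewrite hag // eD eD1.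
Qed.

End Agree2.

Lemma nbT : nat_of_bool true = 1. Proof. by []. Qed.
Lemma nbF : nat_of_bool false = 0. Proof. by []. Qed.
Ltac blia := repeat (match goal with
  | H : context [nat_of_bool true] |- _ => rewrite nbT in H
  | H : context [nat_of_bool false] |- _ => rewrite nbF in H
  | H : context [true || ?b] |- _ => rewrite orTb in H
  | H : context [?b || true] |- _ => rewrite orbT in H
  | H : context [false || ?b] |- _ => rewrite orFb in H
  | H : context [?b || false] |- _ => rewrite orbF in H
  | |- context [nat_of_bool true] => rewrite nbT
  | |- context [nat_of_bool false] => rewrite nbF
  | |- context [true || ?b] => rewrite orTb
  | |- context [?b || true] => rewrite orbT
  | |- context [false || ?b] => rewrite orFb
  | |- context [?b || false] => rewrite orbF
  end); lia.

Section Core.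
Variables (n : nat) (g : rel 'I_n) (D D1 E : rel 'I_n) (u v : 'I_n).
Variable c : ctx g D D1 E u v.
Let c' := ctx_swap c.
Implicit Types S : {set 'I_n}.
Local Notation P := (Pset D u v).
Local Notation Q := (Pset D1 v u).
Local Notation SP := (Spair u v P).
Local Notation SQ := (Spair v u Q).
Local Notation Xs := (Xset u v P Q).
Local Notation Ys := (Xset v u Q P).
Local Notation mX := (mXn D D1 u v).
Local Notation mY := (mXn D1 D v u).


Lemma core_half : 0 < mX ->
  (mX + (0 < mY)) * cf E SP + (mY + (0 < mX)) * cf E SQ <= 1 + (cnt E Xs + cnt E Ys) /\
  ((mX + (0 < mY)) * cf E SP + (mY + (0 < mX)) * cf E SQ = 1 + (cnt E Xs + cnt E Ys) ->
    sameim E D \/ sameim E D1).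
Proof.
move=> mXp; have [x0 x0PQ] := F5 mXp.
have hX : cnt E Xs <= mX := cnt_le E Xs.
have hY : cnt E Ys <= mY := cnt_le E Ys.
case: (posnP mY) => [mY0|mYp].
  have eQ := F6 c mY0.
  have cY0 : cnt E Ys = 0 by blia.
  rewrite mY0 eQ cY0 mXp /=.
  case eP: (cf E SP).
    rewrite (F2 c x0PQ eP); split; first blia.
    move=> _; left; apply: (finD c); first exact: (C4 c x0PQ eP).
    by move=> S cD1 nD; move: nD; rewrite (F4 c' mY0 cD1).
  split; first blia.
  move=> h; right; have h0 : cnt E Xs = 0 by blia.
  apply: (finD c'); last exact: (F3 c h0).
  by move=> S cD1 nD; move: nD; rewrite (F4 c' mY0 cD1).
rewrite mXp /=.
case eP: (cf E SP).
  have eQ : cf E SQ = false by apply/negbTE/(F7 c).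
  rewrite (F2 c x0PQ eP) eQ; split; first blia.
  move=> h; left; have h0 : cnt E Ys = 0 by blia.
  by apply: (finD c); [exact: (C4 c x0PQ eP) | exact: (F3 c' h0)].
case eQ: (cf E SQ).
  have [y0 y0PQ] := F5 mYp.
  rewrite (F2 c' y0PQ eQ); split; first blia.
  move=> h; right; have h0 : cnt E Xs = 0 by blia.
  by apply: (finD c'); [exact: (C4 c' y0PQ eQ) | exact: (F3 c h0)].
split; first blia.
by move=> h; exfalso; blia.
Qed.

End Core.

Section Core2.
Variables (n : nat) (g : rel 'I_n) (D D1 E : rel 'I_n) (u v : 'I_n).
Variable c : ctx g D D1 E u v.
Let c' := ctx_swap c.
Implicit Types S : {set 'I_n}.
Local Notation P := (Pset D u v).
Local Notation Q := (Pset D1 v u).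
Local Notation SP := (Spair u v P).
Local Notation SQ := (Spair v u Q).
Local Notation Xs := (Xset u v P Q).
Local Notation Ys := (Xset v u Q P).
Local Notation mX := (mXn D D1 u v).
Local Notation mY := (mXn D1 D v u).


Lemma core :
  (mX + (0 < mY)) * cf E SP + (mY + (0 < mX)) * cf E SQ
    <= ((0 < mX) || (0 < mY)) + (cnt E Xs + cnt E Ys) /\
  ((mX + (0 < mY)) * cf E SP + (mY + (0 < mX)) * cf E SQ
    = ((0 < mX) || (0 < mY)) + (cnt E Xs + cnt E Ys) ->
    sameim E D \/ sameim E D1).
Proof.
have hX : cnt E Xs <= mX := cnt_le E Xs.
have hY : cnt E Ys <= mY := cnt_le E Ys.
case: (posnP mX) => [mX0|mXp].
  case: (posnP mY) => [mY0|mYp].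
    have cX0 : cnt E Xs = 0 by blia.
    have cY0 : cnt E Ys = 0 by blia.
    rewrite mX0 mY0 cX0 cY0 /=; split => // _; left.
    apply: (finD c).
      by move=> S cD nD1; move: nD1; rewrite (F4 c mX0 cD).
    by move=> S cD1 nD; move: nD; rewrite (F4 c' mY0 cD1).
  have [h1 h2] := core_half c' mYp.
  rewrite ?mX0 ?mYp /= in h1 h2 *.
  split; first blia.
  by move=> h; case: h2; [blia | right | left].
have [h1 h2] := core_half c mXp.
rewrite mXp /= in h1 h2.
by split; [exact: h1 | exact: h2].
Qed.

End Core2.

Section Endp.
Variables (n : nat) (g : rel 'I_n) (D D1 E : rel 'I_n) (u v : 'I_n).
Variable c : ctx g D D1 E u v.
Local Notation P := (Pset D u v).
Local Notation Q := (Pset D1 v u).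
Local Notation SP := (Spair u v P).
Local Notation SQ := (Spair v u Q).
Local Notation Xs := (Xset u v P Q).
Local Notation Ys := (Xset v u Q P).
Local Notation mX := (mXn D D1 u v).
Local Notation mY := (mXn D1 D v u).

Lemma endD : (mX + (0 < mY)) * cf D SP + (mY + (0 < mX)) * cf D SQ
    = ((0 < mX) || (0 < mY)) + (cnt D Xs + cnt D Ys).
Proof.
have cD := ctx_selfD c.
have hX : cnt D Xs <= mX := cnt_le D Xs.
rewrite (cfD_SP c) (cntY0 cD (c_vu c)).
have -> : cnt D Xs = mX.
  case: (posnP mX) => [mX0|mXp]; first by blia.
  by have [x0 x0PQ] := F5 mXp; rewrite (F2 cD x0PQ (cfD_SP c)).
case: (posnP mY) => [mY0|mYp].
  by rewrite (F6 cD mY0) mY0; case: (posnP mX) => *; blia.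
have -> : cf D SQ = false.
  apply/negbTE/negP => cQ; have [y0 y0PQ] := F5 mYp.
  have [duv _] := C2 (ctx_swap cD) y0PQ cQ.
  by move: (acyc_asym (c_hD c) (c_vu c)); rewrite duv.
by case: (posnP mX) => *; blia.
Qed.

End Endp.

Lemma endD1 n g (D D1 E : rel 'I_n) u v (c : ctx g D D1 E u v) :
  (mXn D D1 u v + (0 < mXn D1 D v u)) * cf D1 (Spair u v (Pset D u v)) +
  (mXn D1 D v u + (0 < mXn D D1 u v)) * cf D1 (Spair v u (Pset D1 v u))
    = ((0 < mXn D D1 u v) || (0 < mXn D1 D v u)) +
      (cnt D1 (Xset u v (Pset D u v) (Pset D1 v u)) + cnt D1 (Xset v u (Pset D1 v u) (Pset D u v))).
Proof.
have := endD (ctx_swap c); rewrite orbC.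
by case: (posnP (mXn D D1 u v)) => *; case: (posnP (mXn D1 D v u)) => *; blia.
Qed.

Section Real.
Local Open Scope ring_scope.
Variables (R : realFieldType) (n : nat).
Local Notation pt := (pt R n).

Lemma ciE (d : rel 'I_n) (S : bigsub n) : @char_imset R n d S = (cf d (val S))%:R.
Proof. by rewrite ffunE /cf; case: ifP. Qed.

Lemma sumb (A : {set bigsub n}) : \sum_(S : bigsub n) (S \in A)%:R = (#|A|)%:R :> R.
Proof.
rewrite (eq_bigr (fun S => if S \in A then 1 else 0)); last by move=> S _; case: (S \in A).
by rewrite -big_mkcond /= sumr_const.
Qed.

Lemma sum_single (s0 : bigsub n) (f : bigsub n -> R) :
  \sum_(S : bigsub n) (val S == val s0)%:R * f S = f s0.
Proof.
rewrite (bigD1 s0) //= eqxx mul1r big1 ?addr0 // => S ne.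
by rewrite val_eqE (negbTE ne) mul0r.
Qed.

Lemma alg (M al be : R) (b1 b2 b3 x y p q : bool) :
  (M * (b1%:R + b2%:R - 1) + al * p%:R + be * q%:R - x%:R - y%:R) * b3%:R =
  M * ((b1 && b2)%:R - ((b1 == b2) && (b3 != b1))%:R) + al * (p%:R * b3%:R)
  + be * (q%:R * b3%:R) - (x && b3)%:R - (y && b3)%:R.
Proof. by case: b1; case: b2; case: b3; case: x; case: y; rewrite /=; ring. Qed.

Lemma charim_eq (d e : rel 'I_n) : (forall S : bigsub n, cf d (val S) = cf e (val S)) ->
  @char_imset R n d = char_imset R e.
Proof. by move=> h; apply/ffunP => S; rewrite !ciE h. Qed.

Lemma sameim_char (d e : rel 'I_n) : sameim d e -> @char_imset R n d = char_imset R e.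
Proof. by move=> h; apply: charim_eq => S; apply: h; exact: (valP S). Qed.


Lemma vertex_char (g d : rel 'I_n) : acyclic d -> has_skeleton d g ->
  vertex (@CIM R n g) (char_imset R d).
Proof.
move=> hd hsk.
pose a : pt := [ffun S => 2 * (cf d (val S))%:R - 1].
pose Dset := [set S : bigsub n | cf d (val S)].
pose Dif (e : rel 'I_n) := [set S : bigsub n | cf e (val S) != cf d (val S)].
have key : forall e, dot a (char_imset R e) = #|Dset|%:R - #|Dif e|%:R.
  move=> e; rewrite /dot -!sumb -sumrB; apply: eq_bigr => S _.
  by rewrite ffunE ciE !inE; case: (cf d _); case: (cf e _); rewrite /=; ring.
rewrite /CIM; apply: (vertex_of (a := a) (b := #|Dset|%:R)).
- move=> y [e [_ [_ ->]]]; rewrite key; have := ler0n R #|Dif e|; lra.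
- by exists d.
- rewrite key; have -> : #|Dif d| = 0%N.
    by apply/eqP; rewrite cards_eq0; apply/eqP/setP => S; rewrite !inE eqxx.
  by rewrite subr0.
- move=> y [e [_ [_ ->]]]; rewrite key => h.
  have h0 : #|Dif e|%:R = 0 :> R by lra.
  move/eqP: h0; rewrite pnatr_eq0 cards_eq0 => /eqP hD.
  apply: charim_eq => S; case: (boolP (cf e (val S) == cf d (val S))) => [/eqP //|ne].
  by move/setP: hD => /(_ S); rewrite !inE ne.
Qed.

End Real.

Lemma mkctx n g (D D1 E : rel 'I_n) u v : ctx g D D1 D u v -> acyclic E -> has_skeleton E g ->
  (forall S : {set 'I_n}, (1 < #|S|)%N -> cf D S = cf D1 S -> cf E S = cf D S) -> ctx g D D1 E u v.
Proof. by case=> *; split. Qed.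

Section Flip.
Local Open Scope ring_scope.
Variables (R : realFieldType) (n : nat) (g D D1 : rel 'I_n) (u v : 'I_n).
Variable c0 : ctx g D D1 D u v.
Local Notation pt := (pt R n).
Local Notation P := (Pset D u v).
Local Notation Q := (Pset D1 v u).
Local Notation SP := (Spair u v P).
Local Notation SQ := (Spair v u Q).
Local Notation Xs := (Xset u v P Q).
Local Notation Ys := (Xset v u Q P).
Local Notation mX := (mXn D D1 u v).
Local Notation mY := (mXn D1 D v u).

Let alN := (mX + (0 < mY))%N.
Let beN := (mY + (0 < mX))%N.
Let tN := nat_of_bool ((0 < mX)%N || (0 < mY)%N).
Let M : R := (alN + beN + 1)%:R.
Let s0 := mkbig (card_Spair P (u_neq_v c0)).
Let s1 := mkbig (card_Spair Q (u_neq_v (ctx_swap c0))).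
Let afun : pt := [ffun S => M * ((cf D (val S))%:R + (cf D1 (val S))%:R - 1)
   + alN%:R * (val S == SP)%:R + beN%:R * (val S == SQ)%:R - (S \in Xs)%:R - (S \in Ys)%:R].
Let Kset := [set S : bigsub n | cf D (val S) && cf D1 (val S)].
Let Bad (e : rel 'I_n) :=
  [set S : bigsub n | (cf D (val S) == cf D1 (val S)) && (cf e (val S) != cf D (val S))].
Let bv : R := M * #|Kset|%:R + tN%:R.

Lemma score e : dot afun (char_imset R e) =
  M * (#|Kset|%:R - #|Bad e|%:R) + (alN * cf e SP + beN * cf e SQ)%:R - (cnt e Xs + cnt e Ys)%:R.
Proof.
rewrite /dot.
have h : forall S, afun S * char_imset R e S =
  M * ((S \in Kset)%:R - (S \in Bad e)%:R) + alN%:R * ((val S == val s0)%:R * char_imset R e S)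
  + beN%:R * ((val S == val s1)%:R * char_imset R e S)
  - (S \in [set S in Xs | cf e (val S)])%:R - (S \in [set S in Ys | cf e (val S)])%:R.
  by move=> S; rewrite ffunE ciE alg !inE /=.
rewrite (eq_bigr _ (fun S _ => h S)).
rewrite sumrB sumrB big_split big_split -!mulr_sumr sumrB !sumb (sum_single s0) (sum_single s1) !ciE /=.
rewrite -/(cnt e Xs) -/(cnt e Ys).
rewrite /alN /beN !natrD !natrM.
ring. Qed.


Lemma Abound e : (alN * cf e SP + beN * cf e SQ <= alN + beN)%N.
Proof. by apply: leq_add; rewrite -[X in (_ <= X)%N]muln1 leq_mul2l leq_b1 orbT. Qed.

Lemma main_le e : acyclic e -> has_skeleton e g ->
  dot afun (char_imset R e) <= bv /\
  (dot afun (char_imset R e) = bv -> char_imset R e = char_imset R D \/ char_imset R e = char_imset R D1).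
Proof.
move=> he hske; rewrite score /bv.
have hM : M = (alN + beN)%:R + 1 by rewrite /M natrD.
have hA := Abound e.
case: (posnP #|Bad e|) => [b0|bp].
  have hag : forall S : {set 'I_n}, (1 < #|S|)%N -> cf D S = cf D1 S -> cf e S = cf D S.
    move=> S cS eS; case: (boolP (cf e S == cf D S)) => [/eqP //|ne].
    move/eqP: b0; rewrite cards_eq0 => /eqP /setP /(_ (mkbig cS)).
    by rewrite !inE /= ne eS eqxx.
  have ce := mkctx c0 he hske hag.
  have [h1 h2] := core ce.
  rewrite b0 subr0.
  split.
    have : ((alN * cf e SP + beN * cf e SQ)%N%:R : R) <= (tN + (cnt e Xs + cnt e Ys))%N%:R.
      by rewrite ler_nat.
    rewrite natrD; lra.
  move=> h.
  have : ((alN * cf e SP + beN * cf e SQ)%N%:R : R) = (tN + (cnt e Xs + cnt e Ys))%N%:R.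
    rewrite natrD; lra.
  move/eqP; rewrite eqr_nat => /eqP /h2 [hs|hs]; [left | right]; exact: sameim_char.
have hb : (1 : R) <= #|Bad e|%:R by rewrite ler1n.
have hM0 : (0 : R) <= M by rewrite ler0n.
have hMb : M <= M * #|Bad e|%:R by rewrite -[X in X <= _]mulr1; apply: ler_wpM2l.
have hAr : ((alN * cf e SP + beN * cf e SQ)%N%:R : R) <= (alN + beN)%N%:R by rewrite ler_nat.
have hB : (0 : R) <= (cnt e Xs + cnt e Ys)%N%:R by rewrite ler0n.
have ht : (0 : R) <= tN%:R by rewrite ler0n.
rewrite mulrBr.
split; first lra.
move=> h; exfalso; lra.
Qed.

Lemma endpD : dot afun (char_imset R D) = bv.
Proof.
rewrite score /bv.
have -> : #|Bad D| = 0%N.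
  by apply/eqP; rewrite cards_eq0; apply/eqP/setP => S; rewrite !inE eqxx andbF.
by rewrite subr0 (endD c0) natrD /tN; ring.
Qed.

Lemma endpD1 : dot afun (char_imset R D1) = bv.
Proof.
rewrite score /bv.
have -> : #|Bad D1| = 0%N.
  apply/eqP; rewrite cards_eq0; apply/eqP/setP => S; rewrite !inE.
  by case: (cf D _); case: (cf D1 _).
by rewrite subr0 (endD1 c0) natrD /tN; ring.
Qed.

Lemma flip_adj : char_imset R D != char_imset R D1 ->
  adjacent (@CIM R n g) (char_imset R D) (char_imset R D1).
Proof.
move=> ne.
have hD := c_hD c0; have hD1 := c_hD1 c0; have hsk := c_sk c0; have hsk1 := c_sk1 c0.
split; first exact: vertex_char.
split; first exact: vertex_char.
split; first by apply/eqP.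
rewrite /CIM; apply: (edge_of (a := afun) (b := bv)).
- by move=> y [e [he [hske ->]]]; case: (main_le he hske).
- by exists D.
- by exists D1.
- exact: endpD.
- exact: endpD1.
- by move=> y [e [he [hske ->]]]; case: (main_le he hske).
Qed.

End Flip.

Section Walk.
Variables (n : nat) (g : rel 'I_n).
Implicit Types (d e : rel 'I_n).

Lemma flip_other d x y a b : ~~ ((a == y) && (b == x)) -> ~~ ((a == x) && (b == y)) ->
  flip d x y a b = d a b.
Proof. by move=> h1 h2; rewrite /flip (negbTE h1) (negbTE h2). Qed.

Lemma flip_yx d x y : flip d x y y x = true.
Proof. by rewrite /flip !eqxx. Qed.

Lemma flip_xy d x y : x != y -> flip d x y x y = false.
Proof. by move=> xy; rewrite /flip (negbTE xy) !eqxx. Qed.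

Lemma flip_skel d x y : acyclic d -> has_skeleton d g -> d x y -> has_skeleton (flip d x y) g.
Proof.
move=> hd hsk dxy a b; rewrite -hsk.
have xy : x != y by apply/eqP => e; move: dxy; rewrite e (acyc_irr hd).
case: (boolP ((a == y) && (b == x))) => [/andP [/eqP -> /eqP ->]|h1].
  by rewrite flip_yx dxy orbT.
case: (boolP ((a == x) && (b == y))) => [/andP [/eqP -> /eqP ->]|h2].
  by rewrite flip_yx dxy orbT.
rewrite flip_other // flip_other //.
- by rewrite andbC.
- by rewrite andbC.
Qed.

Lemma flip_ctx d x y : acyclic d -> has_skeleton d g -> d x y -> acyclic (flip d x y) ->
  ctx g d (flip d x y) d y x.
Proof.
move=> hd hsk dxy hf; split => //.
- exact: flip_yx.
- by move=> a b h1 h2; apply: flip_other.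
- exact: flip_skel.
Qed.

Definition diffset d e := [set p : 'I_n * 'I_n | d p.1 p.2 && ~~ e p.1 p.2].

Lemma diff_flip d e x y : acyclic d -> has_skeleton d g -> has_skeleton e g ->
  d x y -> ~~ e x y -> #|diffset (flip d x y) e| = (#|diffset d e|).-1.
Proof.
move=> hd hsk hske dxy nexy.
have xy : x != y by apply/eqP => ee; move: dxy; rewrite ee (acyc_irr hd).
have eyx : e y x by move: (hske x y); rewrite -hsk dxy (negbTE nexy) /= => /esym.
have -> : diffset (flip d x y) e = diffset d e :\ (x, y).
  apply/setP => [[a b]]; rewrite !inE /= xpair_eqE.
  case: (boolP ((a == y) && (b == x))) => [/andP [/eqP -> /eqP ->]|h1].
    by rewrite flip_yx eyx (acyc_asym hd dxy) !andbF.
  case: (boolP ((a == x) && (b == y))) => [/andP [/eqP -> /eqP ->]|h2].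
    by rewrite flip_xy.
  by rewrite flip_other.
have hin : (x, y) \in diffset d e by rewrite inE /= dxy nexy.
by rewrite (cardsD1 (x, y) (diffset d e)) hin.
Qed.

Lemma cf_ext d e (S : {set 'I_n}) : (forall a b, d a b = e a b) -> cf d S = cf e S.
Proof.
move=> h; rewrite /cf; apply: eq_existsb => i.
have -> : parents d i = parents e i by apply/setP => j; rewrite !inE h.
by [].
Qed.

Lemma diff0 d e : acyclic e -> has_skeleton d g -> has_skeleton e g ->
  #|diffset d e| = 0 -> forall a b, d a b = e a b.
Proof.
move=> he hsk hske /eqP; rewrite cards_eq0 => /eqP /setP h0.
have sub : forall a b, d a b -> e a b.
  move=> a b dab; apply/negPn/negP => ne.
  by move: (h0 (a, b)); rewrite !inE /= dab ne.
move=> a b; apply/idP/idP; first exact: sub.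
move=> eab; apply/negPn/negP => nd.
have dba : d b a by move: (hsk a b); rewrite -(hske a b) eab (negbTE nd) /= => ->.
by move: (acyc_asym he eab); rewrite (sub _ _ dba).
Qed.

Lemma diff_le d e : acyclic d -> has_skeleton d g -> (#|diffset d e| <= num_edges g)%N.
Proof.
move=> hd hsk.
pose f (p : 'I_n * 'I_n) := if (p.1 < p.2)%N then p else (p.2, p.1).
have neq : forall p, p \in diffset d e -> p.1 != p.2.
  move=> [a b]; rewrite inE /= => /andP [dab _].
  by apply/eqP => ee; move: dab; rewrite ee (acyc_irr hd).
have inj : {in diffset d e &, injective f}.
  move=> [a b] [a' b'] pin pin'; rewrite /f /=.
  have ab := neq _ pin; have ab' := neq _ pin'.
  move: pin pin'; rewrite !inE /= => /andP [dab _] /andP [dab' _].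
  case: ltnP => h; case: ltnP => h' //.
  - by case=> e1 e2; subst; move: (acyc_asym hd dab); rewrite dab'.
  - by case=> e1 e2; subst; move: (acyc_asym hd dab); rewrite dab'.
  - by case=> -> ->.
rewrite -(card_in_imset inj).
apply: subset_leq_card; apply/subsetP => q /imsetP [[a b] pin ->].
have ab := neq _ pin.
have /andP [dab _] : d a b && ~~ e a b by move: pin; rewrite inE.

rewrite inE /f /=; case: (ltnP a b) => hab /=.
  by rewrite hab -hsk dab.
by rewrite -hsk dab orbT andbT ltn_neqAle hab andbT eq_sym.
Qed.

End Walk.

Lemma walk_exists (R : realFieldType) n (g d' : rel 'I_n) : acyclic d' -> has_skeleton d' g ->
  forall k d, acyclic d -> has_skeleton d g -> (#|diffset d d'| <= k)%N ->
  exists s : seq (pt R n), (size s <= k)%N /\ walk (@CIM R n g) (char_imset R d) s /\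
    last (char_imset R d) s = char_imset R d'.
Proof.
move=> hd' hsk'; elim=> [|k IH] d hd hsk hk.
  exists [::]; split => //; split => //=.
  apply: charim_eq => S; apply: cf_ext; apply: (diff0 hd' hsk hsk').
  by apply/eqP; rewrite -leqn0.
case: (posnP #|diffset d d'|) => [h0|hp].
  exists [::]; split => //; split => //=.
  by apply: charim_eq => S; apply: cf_ext; apply: (diff0 hd' hsk hsk').
have [[p1 p2]] := elimT card_gt0P hp; rewrite inE /= => /andP [dp nd'p].
have hsk_eq : forall a b, d a b || d b a = d' a b || d' b a by move=> a b; rewrite hsk hsk'.
have [x [y [dxy nd'xy hf]]] := exists_flip hd hd' hsk_eq (p := (p1, p2)) dp nd'p.
have c := flip_ctx hd hsk dxy hf.
have hsk1 := flip_skel hd hsk dxy.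
have hk1 : (#|diffset (flip d x y) d'| <= k)%N.
  by rewrite (diff_flip hd hsk hsk' dxy nd'xy) -ltnS (ltn_predK hp).
have [s [hs [hw hl]]] := IH _ hf hsk1 hk1.
case: (eqVneq (char_imset R d) (char_imset R (flip d x y))) => [eq|ne].
  by exists s; rewrite eq; split => //; apply: leq_trans hs _.
exists (char_imset R (flip d x y) :: s); split => //; split => //.
split; last exact: hw.
exact: (flip_adj c ne).
Qed.

Theorem mainTheorem1 (R : realFieldType) (n : nat) (g : rel 'I_n) :
  simple_graph g -> @diam_le R n (@CIM R n g) (num_edges g).
Proof.
move=> _ x y hx hy.
have [d [hd [hsk ->]]] := vertex_in hx.
have [d' [hd' [hsk' ->]]] := vertex_in hy.
exact: (walk_exists R hd' hsk' hd hsk (diff_le d' hd hsk)).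
Qed.
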